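(* Let $\lambda$ be an infinite cardinal with $\lambda=\lambda^{<\lambda}$. Then $(\mathfrak{b}^5_\lambda)'\le\mathfrak{b}^1_\lambda$.
   Context: For sets $A,B$, $A\subseteq^* B$ means $|A\setminus B|<\lambda$. For families $\mathcal{B},\mathcal{C}$ of subsets of $\lambda\times\lambda$, a set $S$ separates $\mathcal{B}$ and $\mathcal{C}$ if $B\subseteq^* S$ for every $B\in\mathcal{B}$ and $|C\cap S|<\lambda$ for every $C\in\mathcal{C}$; $\mathcal{B},\mathcal{C}$ are separable if some $S$ separates them. A family is almost disjoint if any two distinct members meet in fewer than $\lambda$ points. $(\mathfrak{b}^5_\lambda)'$ is the least cardinality of a family $\mathcal{B}\subseteq[\lambda\times\lambda]^\lambda$ for which there is $\mathcal{C}\subseteq[\lambda\times\lambda]^\lambda$ with $|\mathcal{C}|=\lambda$, $\mathcal{B}\cap\mathcal{C}=\emptyset$, $\mathcal{B}\cup\mathcal{C}$ almost disjoint, and such that for every $\mathcal{D}\in[\mathcal{C}]^\lambda$, $\mathcal{B}$ and $\mathcal{D}$ are not separable. For $f,g\in{}^\lambda\lambda$, $f<^* g$ means $|\{\alpha<\lambda: f(\alpha)\ge g(\alpha)\}|<\lambda$ and $f\le^*g$ means $|\{\alpha: f(\alpha)>g(\alpha)\}|<\lambda$; $B\subseteq{}^\lambda\lambda$ is unbounded if no $h$ satisfies $f\le^* h$ for all $f\in B$. $\mathfrak{b}^1_\lambda$ is the least cardinality of an unbounded $B\subseteq{}^\lambda\lambda$ all of whose members are strictly increasing and which is well ordered by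 $<^*$. *)

(* Defs.v *)
(* cardinals are modelled by types and injections. *)
From Stdlib Require Import Classical FunctionalExtensionality PropExtensionality.

Definition le_card (X Y : Type) : Prop := exists f : X -> Y, forall x y, f x = f y -> x = y.
Definition eq_card (X Y : Type) : Prop := le_card X Y /\ le_card Y X.
Definition lt_card (X Y : Type) : Prop := le_card X Y /\ ~ le_card Y X.

(* The cardinal lambda is represented by a type L with a strict well-order lt
   whose order type is an initial ordinal (every proper initial segment is
   of strictly smaller cardinality). *)
Definition is_cardinal_order (L : Type) (lt : L -> L -> Prop) : Prop :=
  well_founded lt /\
  (forall x y z, lt x y -> lt y z -> lt x z) /\
  (forall x y, lt x y \/ x = y \/ lt y x) /\
  (forall a : L, ~ le_card L {b : L | lt b a}).

Definition infinite_type (L : Type) : Prop := le_card nat L.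

(* lambda^{<lambda} = lambda:  | U_{alpha<lambda} lambda^alpha | = lambda *)
Definition lam_lt_lam (L : Type) (lt : L -> L -> Prop) : Prop :=
  eq_card {a : L & ({b : L | lt b a} -> L)} L.

Definition set2 (L : Type) := L * L -> Prop.
Definition fam (L : Type) := set2 L -> Prop.

Section Lam.
Context {L : Type} (lt : L -> L -> Prop).

Definition leL (x y : L) : Prop := lt x y \/ x = y.


Definition small (A : set2 L) : Prop := lt_card {p : L * L | A p} L.
Definition subset_star (A B : set2 L) : Prop := small (fun p => A p /\ ~ B p).
Definition big (A : set2 L) : Prop := eq_card {p : L * L | A p} L.

Definition separates (S : set2 L) (B C : fam L) : Prop :=
  (forall X, B X -> subset_star X S) /\
  (forall Y, C Y -> small (fun p => Y p /\ S p)).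
Definition separable (B C : fam L) : Prop := exists S, separates S B C.

Definition almost_disjoint (F : fam L) : Prop :=
  forall X Y, F X -> F Y -> X <> Y -> small (fun p => X p /\ Y p).

Definition b5'_witness (B : fam L) : Prop :=
  (forall X, B X -> big X) /\
  exists C : fam L,
    (forall Y, C Y -> big Y) /\
    eq_card {Y : set2 L | C Y} L /\
    (forall X, B X -> C X -> False) /\
    almost_disjoint (fun X => B X \/ C X) /\
    (forall D : fam L, (forall Y, D Y -> C Y) -> eq_card {Y : set2 L | D Y} L ->
        ~ separable B D).

Definition lt_star (f g : L -> L) : Prop :=
  lt_card {a : L | leL (g a) (f a)} L.
Definition le_star (f g : L -> L) : Prop :=
  lt_card {a : L | lt (g a) (f a)} L.
Definition unbounded (B : (L -> L) -> Prop) : Prop :=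
  ~ exists h : L -> L, forall f, B f -> le_star f h.
Definition strictly_increasing (f : L -> L) : Prop :=
  forall a b, lt a b -> lt (f a) (f b).
Definition well_ordered_by_lt_star (B : (L -> L) -> Prop) : Prop :=
  (forall f g, B f -> B g -> f <> g -> lt_star f g \/ lt_star g f) /\
  (forall f g, B f -> B g -> lt_star f g -> ~ lt_star g f) /\
  well_founded (fun f g : {h : L -> L | B h} => lt_star (proj1_sig f) (proj1_sig g)).

Definition b1_witness (B : (L -> L) -> Prop) : Prop :=
  (forall f, B f -> strictly_increasing f) /\
  well_ordered_by_lt_star B /\
  unbounded B.
End Lam.

(* Main.v *)
Require Import Defs.
From Stdlib Require Import Classical ClassicalEpsilon FunctionalExtensionality ProofIrrelevance Eqdep.

Lemma sig_ext {A} {P : A -> Prop} (x y : {a | P a}) : proj1_sig x = proj1_sig y -> x = y.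
Proof. destruct x as [x Hx], y as [y Hy]; simpl; intros ->; f_equal; apply proof_irrelevance. Qed.

Lemma le_card_trans X Y Z : le_card X Y -> le_card Y Z -> le_card X Z.
Proof. intros [f Hf] [g Hg]; exists (fun x => g (f x)); auto. Qed.

Lemma lt_card_le X Y Z : le_card X Y -> lt_card Y Z -> lt_card X Z.
Proof. intros H [H1 H2]; split. eapply le_card_trans; eauto. intro H3; apply H2; eapply le_card_trans; eauto. Qed.

Lemma left_inv X Y (c : X -> Y) (x0 : X) : (forall a b, c a = c b -> a = b) -> exists s : Y -> X, forall a, s (c a) = a.
Proof.
  intros Hc.
  assert (H : forall y, exists a, (exists a', c a' = y) -> c a = y).
  { intro y. destruct (classic (exists a', c a' = y)) as [[a' Ha']|Hn]. exists a'; auto. exists x0; intro H; contradiction. }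
  exists (fun y => proj1_sig (constructive_indefinite_description _ (H y))).
  intro a. destruct (constructive_indefinite_description _ (H (c a))) as [b Hb]; simpl. apply Hc, Hb. eauto.
Qed.

Lemma surj_le X Y (s : Y -> X) : (forall x, exists y, s y = x) -> le_card X Y.
Proof. intros H. exists (fun x => proj1_sig (constructive_indefinite_description _ (H x))).
 intros x y E. destruct (constructive_indefinite_description _ (H x)) as [a Ha];
 destruct (constructive_indefinite_description _ (H y)) as [b Hb]; simpl in E; congruence. Qed.

Lemma lt_irrefl L lt : is_cardinal_order L lt -> forall x, ~ lt x x.
Proof. intros [Hwf _] x. induction (Hwf x) as [x _ IH]. intro H. exact (IH x H H). Qed.

Lemma three_avoid L (n : nat -> L) (Hn : forall x y, n x = n y -> x = y) (p q : L) :
  exists x, x <> p /\ x <> q.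
Proof.
  apply NNPP; intro H.
  assert (Hk: forall k, n k = p \/ n k = q).
  { intro k. apply NNPP; intro H'. apply H. exists (n k). split; intro E; apply H'; auto. }
  destruct (Hk 0) as [a|a], (Hk 1) as [b|b], (Hk 2) as [c|c];
  try (assert (E: n 0 = n 1) by congruence; apply Hn in E; discriminate);
  try (assert (E: n 0 = n 2) by congruence; apply Hn in E; discriminate);
  try (assert (E: n 1 = n 2) by congruence; apply Hn in E; discriminate).
Qed.

Lemma reg_weak L lt (Hc : is_cardinal_order L lt) (Hlam : lam_lt_lam L lt) (z0 : L) :
  forall a (e : {b | lt b a} -> L), exists u, forall b, leL lt (e b) u.
Proof.
  intros a e. apply NNPP; intro Hn.
  assert (Hu : forall u, exists b, lt u (e b)).
  { intro u. apply NNPP; intro H2. apply Hn. exists u. intro b.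
    destruct (proj1 (proj2 (proj2 Hc)) (e b) u) as [h|[h|h]].
    left; auto. right; auto. exfalso; apply H2; eauto. }
  destruct Hlam as [[G HG] _].
  set (c := fun k : {b | lt b a} -> L => G (existT (fun a0 => {b | lt b a0} -> L) a k)).
  assert (Hci : forall k k', c k = c k' -> k = k').
  { intros k k' E. apply HG in E. apply inj_pair2 in E. exact E. }
  destruct (left_inv _ _ c (fun _ => z0) Hci) as [s Hs].
  assert (Hd : forall b : {b | lt b a}, exists x, forall y, lt y (e b) -> s y b <> x).
  { intro b. apply NNPP; intro Hn2.
    apply (proj2 (proj2 (proj2 Hc)) (e b)).
    apply (surj_le _ _ (fun y : {y | lt y (e b)} => s (proj1_sig y) b)).
    intro x. apply NNPP; intro Hn3. apply Hn2. exists x. intros y Hy E. apply Hn3.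
    exists (exist _ y Hy). simpl. exact E. }
  set (d := fun b => proj1_sig (constructive_indefinite_description _ (Hd b))).
  assert (Hdp : forall b y, lt y (e b) -> s y b <> d b).
  { intros b y Hy. unfold d. destruct (constructive_indefinite_description _ (Hd b)) as [x Hx]. simpl. auto. }
  destruct (Hu (c d)) as [b Hb].
  apply (Hdp b (c d) Hb). rewrite Hs. reflexivity.
Qed.

Lemma le_seg_small L lt (Hc : is_cardinal_order L lt) (Hlam : lam_lt_lam L lt)
  (n : nat -> L) (Hn : forall x y, n x = n y -> x = y) u : lt_card {y | leL lt y u} L.
Proof.
  split. { exists (@proj1_sig _ _). intros x y; apply sig_ext. }
  intros [j Hj].
  destruct Hlam as [[G HG] _].
  set (c := fun k : {b | lt b u} -> L => j (G (existT (fun a0 => {b | lt b a0} -> L) u k))).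
  assert (Hci : forall k k', c k = c k' -> k = k').
  { intros k k' E. apply Hj, HG in E. apply inj_pair2 in E. exact E. }
  destruct (classic (exists x0, lt x0 u)) as [[x0 Hx0]|Hno].
  2: { assert (H : forall x, proj1_sig (j x) = u).
       { intro x. destruct (j x) as [y [Hy|Hy]]; simpl; [exfalso; apply Hno; eauto| auto]. }
       assert (E : n 0 = n 1) by (apply Hj, sig_ext; rewrite !H; auto). apply Hn in E. discriminate. }
  destruct (left_inv _ _ c (fun _ => n 0) Hci) as [s Hs].
  set (top := exist (fun y => leL lt y u) u (or_intror eq_refl)).
  set (emb := fun b : {b | lt b u} => exist (fun y => leL lt y u) (proj1_sig b) (or_introl (proj2_sig b))).
  assert (Hd : forall b : {b|lt b u}, exists x, x <> s (emb b) b /\ x <> s top b).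
  { intro b. apply (three_avoid L n Hn). }
  set (d := fun b => proj1_sig (constructive_indefinite_description _ (Hd b))).
  assert (Hdp : forall b, d b <> s (emb b) b /\ d b <> s top b).
  { intros b. unfold d. destruct (constructive_indefinite_description _ (Hd b)) as [x Hx]. simpl. auto. }
  set (w := c d).
  assert (Hw : s w = d) by apply Hs.
  destruct (proj2_sig w) as [Hl|He].
  - set (b := exist (fun b => lt b u) (proj1_sig w) Hl).
    assert (E : emb b = w) by (apply sig_ext; reflexivity).
    apply (proj1 (Hdp b)). rewrite E, Hw. reflexivity.
  - assert (E : top = w) by (apply sig_ext; simpl; auto).
    apply (proj2 (Hdp (exist _ x0 Hx0))). rewrite E, Hw. reflexivity.
Qed.

Lemma bounded_small L lt (Hc : is_cardinal_order L lt) (Hlam : lam_lt_lam L lt)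
  (n : nat -> L) (Hn : forall x y, n x = n y -> x = y) (P : L -> Prop) u :
  (forall x, P x -> leL lt x u) -> lt_card {x | P x} L.
Proof.
  intros H. apply lt_card_le with {y | leL lt y u}.
  - exists (fun x => exist _ (proj1_sig x) (H _ (proj2_sig x))). intros x y E.
    apply sig_ext. exact (f_equal (@proj1_sig _ _) E).
  - apply (le_seg_small L lt Hc Hlam n Hn).
Qed.

Lemma small_bounded L lt (Hc : is_cardinal_order L lt) (Hlam : lam_lt_lam L lt) (z0 : L)
  (P : L -> Prop) : lt_card {x | P x} L -> exists u, forall x, P x -> leL lt x u.
Proof.
  intros [_ Hs]. apply NNPP; intro Hn.
  pose proof Hc as [Hwf [Htr [Htri Hseg]]].
  assert (Hu : forall u, exists x, P x /\ lt u x).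
  { intro u. apply NNPP; intro H2. apply Hn. exists u. intros x Px.
    destruct (Htri x u) as [h|[h|h]]. left; auto. right; auto. exfalso; apply H2; eauto. }
  set (F := fun a (rec : forall b, lt b a -> L) =>
    let u := proj1_sig (constructive_indefinite_description _
              (reg_weak L lt Hc Hlam z0 a (fun b => rec (proj1_sig b) (proj2_sig b)))) in
    proj1_sig (constructive_indefinite_description _ (Hu u))).
  set (phi := Fix Hwf (fun _ => L) F).
  assert (Heq : forall a, phi a = F a (fun b _ => phi b)).
  { intro a. unfold phi. refine (Fix_eq Hwf (fun _ => L) F _ a). intros x f g Hfg.
    assert (f = g) by (apply functional_extensionality_dep; intro y;
                       apply functional_extensionality_dep; intro p; apply Hfg).
    subst; reflexivity. }
  assert (Hprop : forall a, P (phi a) /\ forall b, lt b a -> lt (phi b) (phi a)).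
  { intro a. rewrite (Heq a). unfold F. cbv beta zeta.
    destruct (constructive_indefinite_description _ _) as [u Hu']. simpl.
    destruct (constructive_indefinite_description _ _) as [x [Px Hx]]. simpl. split; auto.
    intros b Hb. specialize (Hu' (exist _ b Hb)). simpl in Hu'.
    destruct Hu' as [h|h]; [eapply Htr; eauto | rewrite h; auto]. }
  apply Hs. exists (fun a => exist _ (phi a) (proj1 (Hprop a))).
  intros a b E. apply (f_equal (@proj1_sig _ _)) in E. simpl in E.
  destruct (Htri a b) as [h|[h|h]]; auto; exfalso.
  - apply (proj2 (Hprop b)) in h. rewrite E in h. exact (lt_irrefl _ _ Hc _ h).
  - apply (proj2 (Hprop a)) in h. rewrite E in h. exact (lt_irrefl _ _ Hc _ h).
Qed.

Lemma subsing_small L (n : nat -> L) (Hn : forall x y, n x = n y -> x = y) (T : Type) :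
  (forall x y : T, x = y) -> lt_card T L.
Proof.
  intros Hs. split. exists (fun _ => n 0). intros x y _; apply Hs.
  intros [j Hj]. assert (E : n 0 = n 1) by (apply Hj, Hs). apply Hn in E. discriminate.
Qed.

Theorem mainTheorem9 (L : Type) (lt : L -> L -> Prop)
  (Hcard : is_cardinal_order L lt) (Hinf : infinite_type L)
  (Hlam : lam_lt_lam L lt) :
  forall B1 : (L -> L) -> Prop, b1_witness lt B1 ->
    exists B5 : fam L, b5'_witness B5 /\
      le_card {X : set2 L | B5 X} {f : L -> L | B1 f}.
Proof.
  intros B1 [Hinc [Hwo Hunb]].
  pose proof Hinf as [n Hn].
  pose proof Hcard as [Hwf [Htr [Htri Hseg]]].
  set (z0 := n 0).
  set (graph := fun (f : L -> L) (p : L * L) => snd p = f (fst p)).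
  set (col := fun (a : L) (p : L * L) => fst p = a).
  exists (fun X => exists f, B1 f /\ X = graph f).
  split.
  2: {
    assert (H : forall X : {X | exists f, B1 f /\ X = graph f}, {f | B1 f /\ proj1_sig X = graph f})
      by (intro X; apply constructive_indefinite_description; exact (proj2_sig X)).
    exists (fun X => exist _ (proj1_sig (H X)) (proj1 (proj2_sig (H X)))).
    intros X Y E. apply sig_ext. apply (f_equal (@proj1_sig _ _)) in E. simpl in E.
    etransitivity; [exact (proj2 (proj2_sig (H X)))|]. rewrite E. symmetry; exact (proj2 (proj2_sig (H Y))). }
  split.
  { intros X [f [_ ->]]. split.
    - exists (fun p => fst (proj1_sig p)).
      intros [[a b] Hp] [[a' b'] Hq] E; simpl in *; apply sig_ext; simpl;
      unfold graph in Hp, Hq; simpl in Hp, Hq; subst; reflexivity.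
    - exists (fun a => exist (graph f) (a, f a) eq_refl).
      intros a b E; apply (f_equal (fun p => fst (proj1_sig p))) in E; exact E. }
  exists (fun Y => exists a, Y = col a).
  split; [|split; [|split; [|split]]].
  - intros Y [a ->]. split.
    + exists (fun p => snd (proj1_sig p)).
      intros [[a1 b] Hp] [[a' b'] Hq] E; simpl in *; apply sig_ext; simpl;
      unfold col in Hp, Hq; simpl in Hp, Hq; subst; reflexivity.
    + exists (fun b => exist (col a) (a, b) eq_refl).
      intros x y E; apply (f_equal (fun p => snd (proj1_sig p))) in E; exact E.
  - split.
    + assert (H : forall Y : {Y | exists a, Y = col a}, {a | proj1_sig Y = col a})
        by (intro Y; apply constructive_indefinite_description; exact (proj2_sig Y)).
      exists (fun Y => proj1_sig (H Y)). intros X Y E. apply sig_ext.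
      etransitivity; [exact (proj2_sig (H X))|]. rewrite E. symmetry; exact (proj2_sig (H Y)).
    + exists (fun a => exist (fun Y => exists a, Y = col a) (col a) (ex_intro _ a eq_refl)).
      intros a b E. apply (f_equal (@proj1_sig _ _)) in E. simpl in E.
      assert (H : col b (a, z0)) by (rewrite <- E; reflexivity). exact H.
  - intros X [f [_ ->]] [a E].
    assert (H0 : graph f (a, n 0)) by (rewrite E; reflexivity).
    assert (H1 : graph f (a, n 1)) by (rewrite E; reflexivity).
    unfold graph in H0, H1; simpl in H0, H1.
    assert (E' : n 0 = n 1) by congruence. apply Hn in E'. discriminate.
  - intros X Y HX HY Hne.
    destruct HX as [[f [Hf ->]]|[a ->]], HY as [[g [Hg ->]]|[b ->]].
    + assert (Hfg : f <> g) by (intro; subst; auto).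
      unfold small.
      assert (Hgen : forall f g, lt_star lt f g ->
                lt_card {p : L * L | graph f p /\ graph g p} L).
      { intros f1 g1 Hl. eapply lt_card_le; [|exact Hl].
        unshelve eexists.
        { intros [p [H1 H2]]. exists (fst p). right. unfold graph in *. congruence. }
        intros [[a1 b1] [H1 H2]] [[a2 b2] [H3 H4]] E. simpl in E.
        apply (f_equal (@proj1_sig _ _)) in E. simpl in E. subst.
        apply sig_ext. simpl. unfold graph in *. simpl in *. congruence. }
      destruct (proj1 Hwo f g Hf Hg Hfg) as [Hl|Hl].
      * apply Hgen; auto.
      * eapply lt_card_le; [|apply (Hgen _ _ Hl)].
        exists (fun p => exist _ (proj1_sig p) (conj (proj2 (proj2_sig p)) (proj1 (proj2_sig p)))).
        intros p q E. apply sig_ext. exact (f_equal (@proj1_sig _ _) E).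
    + apply (subsing_small L n Hn). intros [[a1 b1] [H1 H2]] [[a2 b2] [H3 H4]].
      apply sig_ext. unfold graph, col in *. simpl in *. subst. reflexivity.
    + apply (subsing_small L n Hn). intros [[a1 b1] [H1 H2]] [[a2 b2] [H3 H4]].
      apply sig_ext. unfold graph, col in *. simpl in *. subst. reflexivity.
    + apply (subsing_small L n Hn). intros [[a1 b1] [H1 H2]] [[a2 b2] [H3 H4]].
      exfalso. apply Hne. unfold col in *. simpl in *. subst. reflexivity.
  - intros D HDC HDcard [S [HS1 HS2]].
    set (I := fun a => D (col a)).
    assert (HI : forall a, exists i, I i /\ leL lt a i).
    { intro a. apply NNPP; intro Hn1.
      assert (Hb : forall i, I i -> lt i a).
      { intros i Hi. destruct (Htri i a) as [h|[h|h]]; auto; exfalso; apply Hn1; exists i; split; auto.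
        right; auto. left; auto. }
      apply (Hseg a). eapply le_card_trans; [apply (proj2 HDcard)|].
      assert (Hch : forall Y : {Y | D Y}, {b | lt b a /\ proj1_sig Y = col b}).
      { intro Y. apply constructive_indefinite_description. destruct Y as [Y HY]; simpl.
        destruct (HDC Y HY) as [b ->]. exists b. split; [apply Hb; exact HY | reflexivity]. }
      exists (fun Y => exist _ (proj1_sig (Hch Y)) (proj1 (proj2_sig (Hch Y)))).
      intros X Y E. apply sig_ext. apply (f_equal (@proj1_sig _ _)) in E. simpl in E.
      rewrite (proj2 (proj2_sig (Hch X))), (proj2 (proj2_sig (Hch Y))), E. reflexivity. }
    assert (Hbnd : forall i, I i -> exists u, forall b, S (i,b) -> leL lt b u).
    { intros i Hi. apply (small_bounded L lt Hcard Hlam z0 (fun b => S (i, b))).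
      specialize (HS2 _ Hi). unfold small in HS2. eapply lt_card_le; [|exact HS2].
      exists (fun b => exist (fun p => col i p /\ S p) (i, proj1_sig b) (conj eq_refl (proj2_sig b))).
      intros x y E. apply sig_ext. exact (f_equal (fun p => snd (proj1_sig p)) E). }
    assert (Hih : forall a, {p : L * L | I (fst p) /\ leL lt a (fst p) /\
                    forall b, S (fst p, b) -> leL lt b (snd p)}).
    { intro a; apply constructive_indefinite_description.
      destruct (HI a) as [i [Hi Hai]]; destruct (Hbnd i Hi) as [u Hu]; exists (i,u); auto. }
    set (h := fun a => snd (proj1_sig (Hih a))).
    apply Hunb. exists h. intros f Hf. unfold le_star.
    assert (HE : lt_card {a | ~ S (a, f a)} L).
    { specialize (HS1 (graph f) (ex_intro _ f (conj Hf eq_refl))).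
      unfold subset_star, small in HS1. eapply lt_card_le; [|exact HS1].
      exists (fun a => exist (fun p => graph f p /\ ~ S p) (proj1_sig a, f (proj1_sig a))
                        (conj eq_refl (proj2_sig a))).
      intros x y E. apply sig_ext. exact (f_equal (fun p => fst (proj1_sig p)) E). }
    destruct (small_bounded L lt Hcard Hlam z0 _ HE) as [e He].
    apply (bounded_small L lt Hcard Hlam n Hn _ e). intros a Ha.
    unfold h in Ha. destruct (Hih a) as [[i u] [Hi [Hai Hu]]]; simpl in *.
    assert (Hfai : leL lt (f a) (f i)).
    { destruct Hai as [Hai|Hai]; [left; apply (Hinc f Hf); auto | right; subst; auto]. }
    destruct (classic (S (i, f i))) as [HSi|HSi].
    + exfalso. specialize (Hu _ HSi).
      destruct Hfai as [H1|H1], Hu as [H2|H2].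
      * apply (lt_irrefl _ _ Hcard (f a)). eapply Htr; [eapply Htr; eauto|]; eauto.
      * rewrite <- H2 in Ha. apply (lt_irrefl _ _ Hcard (f a)). eapply Htr; eauto.
      * rewrite <- H1 in H2. apply (lt_irrefl _ _ Hcard (f a)). eapply Htr; eauto.
      * rewrite <- H1 in H2. rewrite <- H2 in Ha. apply (lt_irrefl _ _ Hcard _ Ha).
    + specialize (He _ HSi).
      destruct Hai as [H1|H1], He as [H2|H2]; subst; [left; eauto | left; auto | left; auto | right; auto].
Qed.
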